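(* Let $\Delta\ge 4$ be even, $\phi=\pi/\Delta$, and for $j\in\{0,1,\dots,\Delta/2-1\}$ let $$|j_+\rangle=\tfrac{1}{\sqrt2}\big(|0\rangle+e^{ij\phi}|1\rangle\big),\qquad |j_-\rangle=\tfrac{1}{\sqrt2}\big(|0\rangle-e^{ij\phi}|1\rangle\big).$$ Then for all $j\neq k$ in $\{0,\dots,\Delta/2-1\}$ and all signs $s,t\in\{+,-\}$, the probability of observing the outcome $j_s$ when the state $|k_t\rangle$ is measured in the basis $M(j)=\{|j_+\rangle,|j_-\rangle\}$ satisfies $$|\langle j_s|k_t\rangle|^2\le\cos^2\!\left(\frac{\pi}{2\Delta}\right).$$
   Context: Here $i$ in the exponent denotes the imaginary unit, $|0\rangle,|1\rangle$ the computational basis of a qubit, and measuring a state $|\psi\rangle$ in the orthonormal basis $M(j)$ yields outcome $j_s$ with probability $|\langle j_s|\psi\rangle|^2$. *)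

(* Defs.v *)
From Stdlib Require Import Reals.
From Coquelicot Require Import Coquelicot.
Open Scope R_scope.

Definition cexpi (theta : R) : C := (cos theta, sin theta).

Record qubit := Qubit { amp0 : C ; amp1 : C }.

Definition phi (Delta : nat) : R := PI / INR Delta.

(* |j_s> = (|0> + sgn(s) e^{i j phi} |1>)/sqrt 2 ; s = true means '+', false '-' *)
Definition ket (Delta j : nat) (s : bool) : qubit :=
  Qubit (RtoC (/ sqrt 2))
        (Cmult (RtoC ((if s then 1 else -1) * / sqrt 2)) (cexpi (INR j * phi Delta))).

Definition braket (u v : qubit) : C :=
  Cplus (Cmult (Cconj (amp0 u)) (amp0 v)) (Cmult (Cconj (amp1 u)) (amp1 v)).

Definition outcome_prob (u v : qubit) : R := (Cmod (braket u v)) ^ 2.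

(* Main.v *)
Require Import Defs.
From Stdlib Require Import Reals Arith Lra Lia.
From Coquelicot Require Import Coquelicot.
Open Scope R_scope.
Lemma sq1 z : 0 <= z -> sqrt z * (sqrt z * 1) = z.
Proof. intros; rewrite Rmult_1_r; apply sqrt_sqrt; auto. Qed.
Lemma key D j k s t : outcome_prob (ket D j s) (ket D k t) =
  (1 + (if s then 1 else -1) * (if t then 1 else -1) * cos (INR k * phi D - INR j * phi D)) / 2.
Proof.
unfold outcome_prob, braket, ket, cexpi, Cmod. simpl.
rewrite cos_minus.
set (a := if s then 1 else -1). set (b := if t then 1 else -1).
assert (Ha : a * a = 1) by (unfold a; destruct s; lra).
assert (Hb : b * b = 1) by (unfold b; destruct t; lra).
set (x := INR j * phi D). set (y := INR k * phi D).
assert (Hx := sin2_cos2 x). assert (Hy := sin2_cos2 y). unfold Rsqr in *.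
assert (Hr : / sqrt 2 * / sqrt 2 = / 2).
{ rewrite <- Rinv_mult, sqrt_sqrt; lra. }
set (r := / sqrt 2) in *.
set (cx := cos x) in *. set (sx := sin x) in *. set (cy := cos y) in *. set (sy := sin y) in *.
rewrite sq1; [| apply Rplus_le_le_0_compat; rewrite Rmult_1_r; apply Rle_0_sqr].
transitivity ((r*r)*(r*r) * ((1 + a*b*(cx*cy+sx*sy))^2 + (a*b)^2*(cx*sy - sx*cy)^2)); [ring|].
rewrite Hr. 
replace ((1 + a*b*(cx*cy+sx*sy))^2 + (a*b)^2*(cx*sy - sx*cy)^2) with
 (1 + 2*a*b*(cx*cy+sx*sy) + (a*a)*(b*b)*((sx*sx+cx*cx)*(sy*sy+cy*cy))) by ring.
rewrite Ha, Hb, Hx, Hy. field.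
Qed.

Lemma cosd (Delta d : nat) : (1 <= d)%nat -> (d + 1 <= Delta)%nat ->
  cos (INR d * phi Delta) <= cos (phi Delta) /\ - cos (INR d * phi Delta) <= cos (phi Delta).
Proof.
intros H1 H2.
assert (HD : 0 < INR Delta) by (apply lt_0_INR; lia).
assert (Hd : 1 <= INR d) by (apply (le_INR 1); lia).
assert (Hd2 : INR d + 1 <= INR Delta) by (rewrite <- S_INR; apply le_INR; lia).
assert (Hp : phi Delta * INR Delta = PI) by (unfold phi; field; lra).
assert (Hpp : 0 < phi Delta) by (unfold phi; apply Rdiv_lt_0_compat; [apply PI_RGT_0|lra]).
split.
- apply cos_decr_1; nra.
- rewrite <- Rtrigo_facts.cos_pi_minus. apply cos_decr_1; nra.
Qed.

Theorem lemma7 (Delta : nat) :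
  (4 <= Delta)%nat -> Nat.Even Delta ->
  forall (j k : nat), (j < Delta / 2)%nat -> (k < Delta / 2)%nat -> j <> k ->
  forall (s t : bool),
    outcome_prob (ket Delta j s) (ket Delta k t) <= (cos (PI / (2 * INR Delta))) ^ 2.
Proof.
intros H4 [m Hm] j k Hj Hk Hjk s t.
assert (Hd2 : (Delta / 2 = m)%nat) by (subst; rewrite Nat.mul_comm, Nat.div_mul; lia).
rewrite Hd2 in Hj, Hk.
rewrite key.
assert (HD : 0 < INR Delta) by (apply lt_0_INR; lia).
assert (Hc : cos (PI / (2 * INR Delta)) ^ 2 = (1 + cos (phi Delta)) / 2).
{ replace (phi Delta) with (2 * (PI / (2 * INR Delta))) by (unfold phi; field; lra).
  rewrite cos_2a_cos. field. }
rewrite Hc.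
assert (HC : cos (INR k * phi Delta - INR j * phi Delta) <= cos (phi Delta) /\
             - cos (INR k * phi Delta - INR j * phi Delta) <= cos (phi Delta)).
{ destruct (Nat.lt_ge_cases j k) as [H|H].
  - replace (INR k * phi Delta - INR j * phi Delta) with (INR (k - j) * phi Delta)
      by (rewrite minus_INR by lia; ring).
    apply cosd; lia.
  - replace (INR k * phi Delta - INR j * phi Delta) with (- (INR (j - k) * phi Delta))
      by (rewrite minus_INR by lia; ring).
    rewrite cos_neg. apply cosd; lia. }
destruct HC as [HC1 HC2].
destruct s, t; lra.
Qed.
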